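(* Let $\mathcal R_3=\{(0^m1^n2^k,3^m): m,n,k\ge0,\ n\neq k\ \wedge\ (m=k\vee m=n)\}\subseteq\{0,1,2\}^*\times\{3\}^*$. There is no probabilistic finite state transducer computing $\mathcal R_3$ with probability $\alpha$ for any $\alpha>1/2$; in fact, there is no probabilistic finite state transducer computing $\mathcal R_3$ with an isolated cutpoint.
   Context: A probabilistic finite state transducer (pfst) is a tuple $T=(Q,\Sigma_1,\Sigma_2,V,f,q_0,Q_{\rm acc},Q_{\rm rej})$ with finite state set $Q$, finite input/output alphabets $\Sigma_1,\Sigma_2$, initial state $q_0$, disjoint accepting/rejecting sets $Q_{\rm acc},Q_{\rm rej}\subseteq Q$ (the other states are non-halting). For each $a\in\Sigma_1\cup\{\ddagger,\$\}$ ($\ddagger,\$$ are end markers) there is a stochastic $Q\times Q$ matrix $V_a$ and an output function $f_a:Q\to\Sigma_2^*$; $V_\$$ puts all probability on halting states. On input $v$ the machine reads $\ddagger v\$$; in state $q$ reading $a$ it appends $f_a(q)$ to the output tape and moves to state $p$ with probability $(V_a)_{qp}$; if $p$ is accepting (rejecting) it halts and accepts with the current output (rejects). $T(w|v)$ is the probability of accepting with output $w$ on input $v$. For $\alpha>1/2$, $T$ computes $\mathcal R$ with probability $\alpha$ if for all $v,w$: $(v,w)\in\mathcal R\Rightarrow T(w|v)\ge\alpha$ and $(v,w)\notin\mathcal R\Rightarrow T(w|v)\le1-\alpha$. $T$ computes $\mathcal R$ with isolated cutpoint if there are $0<\alpha<1$ and $\varepsilon>0$ such that for all $v,w$: $(v,w)\in\mathcal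 R\Rightarrow T(w|v)\ge\alpha+\varepsilon$ and $(v,w)\notin\mathcal R\Rightarrow T(w|v)\le\alpha-\varepsilon$. *)

(* Defs.v *)
From HB Require Import structures.
From mathcomp Require Import all_boot all_order all_algebra.
From mathcomp Require Import reals.
Set Implicit Arguments. Unset Strict Implicit. Unset Printing Implicit Defensive.
Import Order.TTheory GRing.Theory Num.Theory.
Local Open Scope ring_scope.

Inductive tsym (S : Type) := TSym of S | TStart | TEnd.
Arguments TStart {S}. Arguments TEnd {S}.

Record pfst (R : realType) (S1 S2 : finType) := Pfst {
  st : finType;
  q0 : st;
  Qacc : {set st};
  Qrej : {set st};
  V : tsym S1 -> st -> st -> R;
  f : tsym S1 -> st -> seq S2;
  acc_rej_disj : [disjoint Qacc & Qrej];
  V_ge0 : forall a q p, 0 <= V a q p;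
  V_stoch : forall a q, \sum_(p : st) V a q p = 1;
  V_end_halts : forall q p, p \notin Qacc -> p \notin Qrej -> V TEnd q p = 0
}.

Section Run.
Variables (R : realType) (S1 S2 : finType) (T : pfst R S1 S2).

(* acc_from s q u w : probability of accepting with output w, when in the
   (non-halting) state q with current output u, with s the rest of the tape. *)
Fixpoint acc_from (s : seq (tsym S1)) (q : st T) (u w : seq S2) : R :=
  match s with
  | [::] => 0
  | a :: s' =>
      let u' := u ++ @f _ _ _ T a q in
      \sum_(p : @st _ _ _ T) @V _ _ _ T a q p *
        (if p \in @Qacc _ _ _ T then (if u' == w then 1 else 0)
         else if p \in @Qrej _ _ _ T then 0
         else acc_from s' p u' w)
  end.

End Run.

Definition Tprob (R : realType) (S1 S2 : finType) (T : pfst R S1 S2)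
  (w : seq S2) (v : seq S1) : R :=
  @acc_from _ _ _ T (TStart :: rcons (map (@TSym S1) v) TEnd) (@q0 _ _ _ T) [::] w.

Definition computes_with_prob (R : realType) (S1 S2 : finType)
  (Rel : seq S1 -> seq S2 -> Prop) (T : pfst R S1 S2) (alpha : R) : Prop :=
  forall v w, (Rel v w -> alpha <= Tprob T w v) /\ (~ Rel v w -> Tprob T w v <= 1 - alpha).

Definition computes_isolated_cutpoint (R : realType) (S1 S2 : finType)
  (Rel : seq S1 -> seq S2 -> Prop) (T : pfst R S1 S2) : Prop :=
  exists alpha eps : R, [/\ 0 < alpha, alpha < 1, 0 < eps &
    forall v w, (Rel v w -> alpha + eps <= Tprob T w v) /\
                (~ Rel v w -> Tprob T w v <= alpha - eps)].

(* Input alphabet {0,1,2} = 'I_3; output alphabet {3} is a one-letter alphabet,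
   represented by 'I_1 whose unique letter (ord0) stands for the symbol 3. *)
Definition three : 'I_1 := ord0.

Definition R3 (v : seq 'I_3) (w : seq 'I_1) : Prop :=
  exists m n k : nat, [/\ n <> k, (m = k \/ m = n),
    v = nseq m (0 : 'I_3) ++ nseq n (1 : 'I_3) ++ nseq k (2 : 'I_3) &
    w = nseq m three].

(* Main.v *)
Require Import Defs.
From mathcomp Require Import all_boot all_order all_algebra reals.
From mathcomp Require Import zify ring lra.
Import Order.TTheory GRing.Theory Num.Theory.
Local Open Scope ring_scope.
Set Implicit Arguments. Unset Strict Implicit. Unset Printing Implicit Defensive.

Section AccLemmas.
Variables (R : realType) (S1 S2 : finType) (T : pfst R S1 S2).

Lemma acc_cat_pref (s : seq (tsym S1)) (q : st T) (x u w : seq S2) :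
  acc_from s q (x ++ u) (x ++ w) = acc_from s q u w.
Proof.
elim: s q u => [//|a s IH] q u /=.
apply: eq_bigr => p _.
by rewrite -catA IH eqseq_cat // eqxx.
Qed.

Lemma acc_long (s : seq (tsym S1)) (q : st T) (u w : seq S2) :
  (size w < size u)%N -> acc_from s q u w = 0.
Proof.
elim: s q u => [//|a s IH] q u /= Hs.
apply: big1 => p _.
have Hs' : (size w < size (u ++ @f _ _ _ T a q))%N.
  by rewrite size_cat; apply: (leq_trans Hs); rewrite leq_addr.
have -> : (u ++ @f _ _ _ T a q == w) = false.
  by apply/negbTE/eqP => E; move: Hs'; rewrite E ltnn.
by rewrite IH // !if_same mulr0.
Qed.

Lemma acc_ge0 (s : seq (tsym S1)) (q : st T) (u w : seq S2) :
  0 <= acc_from s q u w.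
Proof.
elim: s q u => [//|a s IH] q u /=.
apply: sumr_ge0 => p _; apply: mulr_ge0; first exact: V_ge0.
by case: ifP => _; [case: eqP|case: ifP].
Qed.

End AccLemmas.

Lemma unary (u : seq 'I_1) : u = nseq (size u) three.
Proof. by elim: u => //= x u <-; rewrite [x]ord1. Qed.

Lemma eq_nseq_three a b : (nseq a three == nseq b three) = (a == b).
Proof.
apply/eqP/eqP => [E|->//]; by rewrite -(size_nseq a three) E size_nseq.
Qed.

Section Main.
Variables (R : realType) (T : pfst R 'I_3 'I_1).
Local Notation Q := (st T).
Local Notation VV := (@V _ _ _ T).
Local Notation ff := (@f _ _ _ T).
Definition two : 'I_3 := 2%R.
Definition s2 k : seq (tsym 'I_3) := rcons (nseq k (TSym two)) TEnd.
Definition F k (q : Q) d := acc_from (s2 k) q [::] (nseq d three).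

Lemma acc_unary s (q : Q) u r : acc_from s q u (nseq r three) =
  if (size u <= r)%N then acc_from s q [::] (nseq (r - size u) three) else 0.
Proof.
case: leqP => H; last by rewrite acc_long // size_nseq.
rewrite -(acc_cat_pref s q u [::]) cats0; congr acc_from.
by rewrite [in RHS](unary u) -nseqD size_nseq subnKC.
Qed.

Definition o (q : Q) := size (ff (TSym two) q).
Definition nh (p : Q) := (p \notin Qacc T) && (p \notin Qrej T).
Definition N (q y : Q) : R := if (o q == 0%N) && nh y then VV (TSym two) q y else 0.
Definition hd d (q : Q) : R :=
  \sum_p VV (TSym two) q p * (if p \in Qacc T then (if o q == d then 1 else 0) else 0).
Definition B d k (q : Q) : R := hd d q +
  (if o q == 0%N then 0 else \sum_p (if nh p then VV (TSym two) q p *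
      (if (o q <= d)%N then F k p (d - o q) else 0) else 0)).

Lemma F_rec k q d : F k.+1 q d = B d k q + \sum_y N q y * F k y d.
Proof.
rewrite /F /s2 /= /B /hd /N.
rewrite (_ : \sum_p _ = \sum_p (VV (TSym two) q p * (if p \in Qacc T then (if o q == d then 1 else 0) else 0)
   + (if nh p then VV (TSym two) q p * (if (o q <= d)%N then F k p (d - o q) else 0) else 0))).
  rewrite big_split /= -addrA; congr (_ + _).
  case: eqP => Hq.
    rewrite Hq add0r; apply: eq_bigr => p _ /=.
    by case: ifP => _; rewrite ?mul0r // subn0.
  by rewrite [X in _ + X]big1 ?addr0 // => y _; rewrite mul0r.
apply: eq_bigr => p _.
rewrite /nh /= {1 2}(unary (ff (TSym two) q)) eq_nseq_three acc_unary size_nseq -/(o q).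
by case: ifP => Ha; case: ifP => Hr /=; rewrite ?mulr0 ?addr0 ?add0r.
Qed.

Fixpoint Npow t (q x : Q) : R :=
  match t with 0%N => (q == x)%:R | t'.+1 => \sum_y N q y * Npow t' y x end.

Lemma sum_delta (q : Q) (g : Q -> R) : \sum_x (q == x)%:R * g x = g q.
Proof.
rewrite (bigD1 q) //= eqxx mul1r [X in _ + X]big1 ?addr0 // => x Hx.
by rewrite eq_sym (negbTE Hx) mul0r.
Qed.

Lemma gen_rec (X Bf : nat -> Q -> R) :
  (forall k q, X k.+1 q = Bf k q + \sum_y N q y * X k y) ->
  forall k q, X k q = \sum_(0 <= t < k) \sum_x Npow t q x * Bf (k - t.+1)%N x
                      + \sum_x Npow k q x * X 0%N x.
Proof.
move=> HX; elim=> [|k IH] q.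
  rewrite big_geq // add0r /=.
  by rewrite sum_delta.
rewrite HX big_nat_recl //= sum_delta.
rewrite subSS subn0 -addrA; congr (_ + _).
rewrite (eq_bigr (fun y => N q y * (\sum_(0 <= t < k) \sum_x Npow t y x * Bf (k - t.+1)%N x)
   + N q y * \sum_x Npow k y x * X 0%N x)); last by move=> y _; rewrite IH mulrDr.
rewrite big_split /=; congr (_ + _).
  rewrite (eq_bigr (fun y => \sum_(0 <= t < k) \sum_x N q y * (Npow t y x * Bf (k - t.+1)%N x))); last first.
    by move=> y _; rewrite mulr_sumr; apply: eq_bigr => t _; rewrite mulr_sumr.
  rewrite exchange_big /=; apply: eq_bigr => t _.
  rewrite exchange_big /=; apply: eq_bigr => x _.
  by rewrite subSS mulr_suml; apply: eq_bigr => y _; rewrite mulrA.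
rewrite (eq_bigr (fun y => \sum_x N q y * (Npow k y x * X 0%N x))); last by move=> y _; rewrite mulr_sumr.
rewrite exchange_big /=; apply: eq_bigr => x _.
by rewrite mulr_suml; apply: eq_bigr => y _; rewrite mulrA.
Qed.


Lemma N_ge0 q y : 0 <= N q y.
Proof. by rewrite /N; case: ifP => // _; exact: V_ge0. Qed.

Lemma Npow_ge0 t q x : 0 <= Npow t q x.
Proof.
elim: t q => [|t IH] q /=; first by rewrite ler0n.
by apply: sumr_ge0 => y _; apply: mulr_ge0; [exact: N_ge0|exact: IH].
Qed.

Lemma Npow_add u v q x : Npow (u + v) q x = \sum_y Npow u q y * Npow v y x.
Proof.
elim: u q => [|u IH] q /=; first by rewrite add0n sum_delta.
rewrite (eq_bigr (fun z => \sum_y N q z * (Npow u z y * Npow v y x))); last first.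
  by move=> z _; rewrite IH mulr_sumr.
rewrite exchange_big /=; apply: eq_bigr => y _.
by rewrite mulr_suml; apply: eq_bigr => z _; rewrite mulrA.
Qed.

Lemma Npow1 q x : Npow 1 q x = N q x.
Proof.
rewrite /= (bigD1 x) //= eqxx mulr1 [X in _ + X]big1 ?addr0 // => y Hy.
by rewrite (negbTE Hy) mulr0.
Qed.

Definition rr (x : Q) : R :=
  if o x == 0%N then 0 else \sum_p (if nh p then VV (TSym two) x p else 0).

Lemma rr_ge0 x : 0 <= rr x.
Proof.
rewrite /rr; case: ifP => // _; apply: sumr_ge0 => p _; case: ifP => // _; exact: V_ge0.
Qed.

Lemma N_rr x : \sum_y N x y + rr x <= 1.
Proof.
rewrite -(V_stoch (TSym two) x) /rr /N.
case: eqP => _ /=.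
  rewrite addr0; apply: ler_sum => p _; case: ifP => // _; exact: V_ge0.
rewrite big1 // add0r; apply: ler_sum => p _; case: ifP => // _; exact: V_ge0.
Qed.

Lemma N_row x : \sum_y N x y <= 1.
Proof. by apply: le_trans (N_rr x); rewrite lerDl rr_ge0. Qed.

Lemma sum_delta1 (q : Q) : \sum_x (q == x)%:R = 1 :> R.
Proof. by rewrite (eq_bigr (fun x => (q == x)%:R * 1)) ?sum_delta // => x _; rewrite mulr1. Qed.

Lemma Npow_row t q : \sum_x Npow t q x <= 1.
Proof.
elim: t q => [|t IH] q /=; first by rewrite sum_delta1.
rewrite exchange_big /=.
apply: le_trans (N_row q); apply: ler_sum => y _.
by rewrite -mulr_sumr ler_piMr ?N_ge0.
Qed.

Lemma Npow_le1 t q x : Npow t q x <= 1.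
Proof.
apply: le_trans (Npow_row t q).
rewrite (bigD1 x) //= lerDl; apply: sumr_ge0 => y _; exact: Npow_ge0.
Qed.

Lemma first_out m q : \sum_(0 <= t < m) \sum_x Npow t q x * rr x <= 1.
Proof.
have step : forall t, \sum_x Npow t q x * rr x <=
   \sum_x Npow t q x - \sum_x Npow t.+1 q x.
  move=> t.
  rewrite [X in _ <= _ - X](eq_bigr (fun x => \sum_y Npow t q y * Npow 1 y x)); last first.
    by move=> x _; rewrite -Npow_add addn1.
  rewrite [X in _ <= _ - X]exchange_big /= -sumrB; apply: ler_sum => y _.
  rewrite -mulr_sumr -{2}(mulr1 (Npow t q y)) -mulrBr ler_wpM2l ?Npow_ge0 //.
  rewrite lerBrDl (eq_bigr (fun x => N y x)); last by move=> x _; exact: (Npow1 y x).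
  exact: N_rr.
apply: le_trans (_ : \sum_(0 <= t < m) (\sum_x Npow t q x - \sum_x Npow t.+1 q x) <= 1).
  by apply: ler_sum => t _; exact: step.
under eq_bigr do rewrite -opprB.
rewrite sumrN telescope_sumr // opprB /= sum_delta1 lerBlDr lerDl.
by apply: sumr_ge0 => x _; exact: Npow_ge0.
Qed.

Definition cc : nat := \max_(q : Q) size (ff TEnd q).

Lemma F_ge0 k q d : 0 <= F k q d.
Proof. exact: acc_ge0. Qed.

Lemma F0_le1 q d : F 0 q d <= 1.
Proof.
rewrite /F /s2 /= -[X in _ <= X](V_stoch TEnd q); apply: ler_sum => p _.
rewrite -{2}(mulr1 (VV TEnd q p)) ler_wpM2l ?V_ge0 //.
by case: ifP => _; [case: eqP|case: ifP].
Qed.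

Lemma F0_big q d : (cc < d)%N -> F 0 q d = 0.
Proof.
move=> Hd; rewrite /F /s2 /=; apply: big1 => p _.
have -> : (ff TEnd q == nseq d three) = false.
  apply/negbTE/eqP => E.
  have : (size (ff TEnd q) <= cc)%N by apply: (@leq_bigmax _ (fun q => size (ff TEnd q))).
  by rewrite E size_nseq leqNgt Hd.
by rewrite !if_same mulr0.
Qed.

Definition D (L m : nat) (q : Q) d : R :=
  if (L <= m)%N then Num.max 0 (F (m - L) q d - F m q d) else 0.

Definition G (L m' : nat) (x : Q) d : R :=
  if o x == 0%N then 0 else \sum_p (if nh p then VV (TSym two) x p *
      (if (o x <= d)%N then D L m' p (d - o x) else 0) else 0).

Lemma D_ge0 L m q d : 0 <= D L m q d.
Proof. by rewrite /D; case: ifP => // _; rewrite le_max lexx. Qed.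

Lemma G_ge0 L m x d : 0 <= G L m x d.
Proof.
rewrite /G; case: ifP => // _; apply: sumr_ge0 => p _; case: ifP => // _.
by apply: mulr_ge0; [exact: V_ge0|case: ifP => _; rewrite ?D_ge0].
Qed.

Lemma B_ge0 d k x : 0 <= B d k x.
Proof.
rewrite /B; apply: addr_ge0.
  apply: sumr_ge0 => p _; apply: mulr_ge0; first exact: V_ge0.
  by case: ifP => _ //; case: ifP.
case: ifP => // _; apply: sumr_ge0 => p _; case: ifP => // _.
by apply: mulr_ge0; [exact: V_ge0|case: ifP => _; rewrite ?F_ge0].
Qed.

Lemma B_diff L m' x d : (L <= m')%N -> B d (m' - L) x - B d m' x <= G L m' x d.
Proof.
move=> HL; rewrite /B /G opprD addrACA subrr add0r.
case: ifP => _; first by rewrite subrr.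
rewrite -sumrB; apply: ler_sum => p _; case: ifP => _; last by rewrite subrr.
rewrite -mulrBr ler_wpM2l ?V_ge0 //; case: ifP => _; last by rewrite subrr.
by rewrite /D HL le_max lexx orbT.
Qed.

Lemma diff_bound L m q d : (L <= m)%N ->
  F (m - L) q d - F m q d <=
    \sum_x (Npow (m - L) q x - Npow m q x) * F 0 x d
  + \sum_(0 <= t < m) \sum_x Npow t q x * G L (m - t.+1) x d.
Proof.
move=> HL.
have E := @gen_rec (fun k q => F k q d) (fun k q => B d k q) (fun k q => F_rec k q d).
rewrite !E.
have Hs : (m - L <= m)%N by rewrite leq_subr.
rewrite [X in _ - (X + _)](big_cat_nat (leq0n (m - L)) Hs) /=.
rewrite [X in _ <= _ + X](big_cat_nat (leq0n (m - L)) Hs) /=.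
set A1 := \sum_(0 <= t < m - L) _.
set A2 := \sum_(0 <= t < m - L) _.
set A3 := \sum_(m - L <= t < m) _.
set G1 := \sum_(0 <= t < m - L) _.
set G2 := \sum_(m - L <= t < m) _.
have A3p : 0 <= A3.
  apply: sumr_ge0 => t _; apply: sumr_ge0 => x _.
  by apply: mulr_ge0; [exact: Npow_ge0|exact: B_ge0].
have G2p : 0 <= G2.
  apply: sumr_ge0 => t _; apply: sumr_ge0 => x _.
  by apply: mulr_ge0; [exact: Npow_ge0|exact: G_ge0].
have HA : A1 - A2 <= G1.
  rewrite /A1 /A2 /G1 -sumrB; apply: ler_sum_nat => t /andP[_ Ht].
  rewrite -sumrB; apply: ler_sum => x _.
  rewrite -mulrBr ler_wpM2l ?Npow_ge0 //.
  rewrite subnAC; apply: B_diff.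
  lia.
have EG : \sum_x (Npow (m - L) q x - Npow m q x) * F 0 x d =
   \sum_x Npow (m - L) q x * F 0 x d - \sum_x Npow m q x * F 0 x d.
  by rewrite -sumrB; apply: eq_bigr => x _; rewrite mulrBl.
rewrite EG; lra.
Qed.

Section HB.
Variables (I : finType) (S : {set I}) (L : I -> nat) (a : nat) (del : R).
Hypothesis del_ge0 : 0 <= del.
Hypothesis hclose : forall j, j \in S -> forall s q, (a <= s)%N ->
  \sum_x `|Npow s q x - Npow (s + L j) q x| <= del.
Hypothesis hgap : forall j j' m, j \in S -> j' \in S ->
  (L j <= m < L j + a)%N -> (L j' <= m < L j' + a)%N -> j = j'.

Definition K0 : R := #|S|%:R * del + 1.

Lemma K0_ge0 : 0 <= K0.
Proof. by rewrite /K0; apply: addr_ge0 => //; apply: mulr_ge0; rewrite ?ler0n. Qed.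

Lemma crude_sum m : \sum_(j in S) ((L j <= m < L j + a)%N)%:R <= 1 :> R.
Proof.
case: (pickP (fun j => (j \in S) && (L j <= m < L j + a)%N)) => [j0 /andP[Hj0 Pj0]|none].
  rewrite (bigD1 j0) //= Pj0 big1 ?addr0 // => j /andP[Hj Hne].
  case Pj: (L j <= m < L j + a)%N => //.
  by rewrite (hgap Hj Hj0 Pj Pj0) eqxx in Hne.
rewrite big1 ?ler01 // => j Hj.
by move: (none j); rewrite Hj /= => ->.
Qed.

Definition Gam m q d j : R :=
  if (L j <= m)%N then Num.max 0 (\sum_x (Npow (m - L j) q x - Npow m q x) * F 0 x d) else 0.

Lemma Gam_bound m q d : \sum_(j in S) Gam m q d j <= (if (d <= cc)%N then K0 else 0).
Proof.
case: leqP => Hd; last first.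
  rewrite big1 // => j _; rewrite /Gam; case: ifP => // _.
  by rewrite big1 ?maxxx // => x _; rewrite F0_big // mulr0.
apply: le_trans (_ : \sum_(j in S) (del + ((L j <= m < L j + a)%N)%:R) <= K0).
  apply: ler_sum => j Hj; rewrite /Gam; case: ifP => HL; last first.
    by apply: addr_ge0; rewrite ?ler0n.
  rewrite ge_max; apply/andP; split; first by apply: addr_ge0; rewrite ?ler0n.
  case: ltnP => Ha /=.
    apply: le_trans (_ : 1 <= _); last by rewrite lerDr.
    apply: le_trans (Npow_row (m - L j) q); apply: ler_sum => x _.
    rewrite mulrBl lerBlDr; apply: le_trans (_ : Npow (m - L j) q x <= _).
      by rewrite -{2}(mulr1 (Npow _ q x)) ler_wpM2l ?Npow_ge0 ?F0_le1.
    by rewrite lerDl; apply: mulr_ge0; [exact: Npow_ge0|exact: F_ge0].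
  have Hc := hclose Hj q (_ : (a <= m - L j)%N); rewrite subnK // in Hc.
  rewrite addr0; apply: le_trans (Hc _); last by lia.
  apply: ler_sum => x _.
  apply: le_trans (_ : `|Npow (m - L j) q x - Npow m q x| * F 0 x d <= _).
    by rewrite ler_wpM2r ?F_ge0 ?ler_norm.
  by rewrite -[X in _ <= X](mulr1 `|_|) ler_wpM2l ?normr_ge0 ?F0_le1.
rewrite big_split /= sumr_const /K0 -[del *+ _]mulr_natl lerD2l; exact: crude_sum.
Qed.

Definition bet d : R := K0 * (minn d cc).+1%:R.
Definition betp d : R := if d is d'.+1 then bet d' else 0.

Lemma bet_ge0 d : 0 <= bet d.
Proof. by rewrite /bet mulr_ge0 ?K0_ge0 ?ler0n. Qed.

Lemma betp_ge0 d : 0 <= betp d.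
Proof. by case: d => [|d] //=; exact: bet_ge0. Qed.

Lemma bet_mono d1 d2 : (d1 <= d2)%N -> bet d1 <= bet d2.
Proof.
move=> H; rewrite /bet ler_wpM2l ?K0_ge0 // ler_nat ltnS.
lia.
Qed.

Lemma H_bound d m q : \sum_(j in S) D (L j) m q d <= bet d.
Proof.
elim/ltn_ind: d m q => d IH m q.
have step1 : forall j, D (L j) m q d <= Gam m q d j +
    \sum_(0 <= t < m) \sum_x Npow t q x * G (L j) (m - t.+1) x d.
  move=> j.
  have Rp : 0 <= \sum_(0 <= t < m) \sum_x Npow t q x * G (L j) (m - t.+1) x d.
    apply: sumr_ge0 => t _; apply: sumr_ge0 => x _.
    by apply: mulr_ge0; [exact: Npow_ge0|exact: G_ge0].
  rewrite /D /Gam; case: ifP => HL; last by rewrite add0r.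
  rewrite ge_max; apply/andP; split; first by apply: addr_ge0 => //; rewrite le_max lexx.
  apply: le_trans (diff_bound q d HL) _.
  by rewrite lerD2r le_max lexx orbT.
have step2 : forall t x, \sum_(j in S) G (L j) (m - t.+1) x d <= rr x * betp d.
  move=> t x; rewrite /G /rr; case: ifP => Ho.
    by rewrite big1 ?mul0r.
  rewrite exchange_big mulr_suml; apply: ler_sum => p _.
  case: ifP => _; last by rewrite big1 ?mul0r.
  rewrite -mulr_sumr ler_wpM2l ?V_ge0 //.
  case Hod: (o x <= d)%N; last by rewrite big1 ?betp_ge0.
  clear step1; case: d IH Hod => [|d] IH Hod; first by move: Ho Hod; rewrite leqn0 => ->.
  move/negbT: Ho; rewrite -lt0n => Ho.
  apply: le_trans (IH _ _ _ _) _; first lia.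
  by apply: bet_mono; lia.
apply: le_trans (_ : \sum_(j in S) (Gam m q d j +
    \sum_(0 <= t < m) \sum_x Npow t q x * G (L j) (m - t.+1) x d) <= _).
  by apply: ler_sum => j _; exact: step1.
rewrite big_split /=.
apply: le_trans (_ : (if (d <= cc)%N then K0 else 0) + betp d <= _); last first.
  rewrite /betp /bet; case: d {IH step1 step2} => [|d].
    by rewrite /= addr0 (_ : minn 0 cc = 0%N) ?mulr1 //; lia.
  case: ltnP => Hd.
    rewrite (minn_idPl Hd).
    by rewrite [in X in _ <= X]mulrS mulrDr mulr1.
  by rewrite add0r (minn_idPr (leqW Hd)).
apply: lerD; first exact: Gam_bound.
rewrite exchange_big /=.
apply: le_trans (_ : \sum_(0 <= t < m) \sum_x Npow t q x * (rr x * betp d) <= _).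
  apply: ler_sum_nat => t _; rewrite exchange_big /=; apply: ler_sum => x _.
  by rewrite -mulr_sumr ler_wpM2l ?Npow_ge0 ?step2.
apply: le_trans (_ : betp d * \sum_(0 <= t < m) \sum_x Npow t q x * rr x <= _).
  rewrite mulr_sumr; apply: ler_sum_nat => t _; rewrite mulr_sumr; apply: ler_sum => x _.
  by rewrite mulrA mulrC lexx.
by rewrite -[X in _ <= X]mulr1 ler_wpM2l ?betp_ge0 ?first_out.
Qed.

End HB.

End Main.

Lemma prefix_gen (R : realType) (S1 S2 : finType) (T : pfst R S1 S2)
  (I : finType) (S : {set I}) (g : I -> seq (tsym S1)) (g0 : seq (tsym S1))
  (w : seq S2) (Bm : R) :
  0 <= Bm ->
  (forall (q : st T) u, \sum_(j in S) (acc_from (g j) q u w - acc_from g0 q u w) <= Bm) ->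
  forall s1 (q : st T) u, \sum_(j in S) (acc_from (s1 ++ g j) q u w
       - acc_from (s1 ++ g0) q u w) <= Bm.
Proof.
move=> HB HF; elim=> [|a s1 IH] q u; first exact: HF.
rewrite cat_cons.
set X := fun s p => (if p \in Qacc T then (if u ++ @f _ _ _ T a q == w then 1 else 0)
    else if p \in Qrej T then 0 else acc_from s p (u ++ @f _ _ _ T a q) w).
have E : forall s, acc_from (a :: s) q u w = \sum_p @V _ _ _ T a q p * X s p by [].
rewrite (eq_bigr (fun j => \sum_p @V _ _ _ T a q p * (X (s1 ++ g j) p - X (s1 ++ g0) p))); last first.
  by move=> j _; rewrite !E -sumrB; apply: eq_bigr => p _; rewrite mulrBr.
rewrite exchange_big /=.
apply: le_trans (_ : \sum_p @V _ _ _ T a q p * Bm <= _); last by rewrite -mulr_suml V_stoch mul1r.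
apply: ler_sum => p _; rewrite -mulr_sumr ler_wpM2l ?V_ge0 //.
rewrite /X; case: (p \in Qacc T); first by rewrite big1 // => j _; rewrite subrr.
case: (p \in Qrej T); first by rewrite big1 // => j _; rewrite subrr.
exact: IH.
Qed.

Lemma pigeon (A B : finType) (g : A -> B) (P : nat) :
  (#|B| * P < #|A|)%N -> exists b, (P < #|[set x | g x == b]|)%N.
Proof.
move=> H; case: (boolP [exists b, (P < #|[set x | g x == b]|)%N]) => [/existsP //|/existsPn Hn].
exfalso.
have : (#|A| <= #|B| * P)%N.
  have E : #|A| = (\sum_b #|[set x | g x == b]|)%N.
    rewrite -sum1_card (partition_big g xpredT) //; apply: eq_bigr => b _.
    by rewrite -sum1_card; apply: eq_bigl => x; rewrite !inE.
  rewrite E; apply: leq_trans (_ : (\sum_(b : B) P <= _)%N).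
    by apply: leq_sum => b _; move: (Hn b); rewrite -leqNgt.
  by rewrite sum_nat_const.
by rewrite leqNgt H.
Qed.

Section Main2.
Variables (R : realType) (T : pfst R 'I_3 'I_1).
Local Notation Q := (st T).
Local Notation VV := (@V _ _ _ T).

Lemma base_bound (I : finType) (S : {set I}) (L : I -> nat) (m : nat) (Bm : R) :
  0 <= Bm ->
  (forall (q : Q) d, \sum_(j in S) (F (m - L j) q d - F m q d) <= Bm) ->
  forall (q : Q) u, \sum_(j in S) (acc_from (s2 (m - L j)) q u (nseq m three)
       - acc_from (s2 m) q u (nseq m three)) <= Bm.
Proof.
move=> HB HF q u.
rewrite /F in HF; under eq_bigr do rewrite 2![acc_from _ _ u _]acc_unary.
case: (size u <= m)%N; first exact: HF.
by rewrite big1 // => j _; rewrite subrr.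
Qed.

Lemma cell_close (K : nat) (A B : R) : (0 < K)%N -> 0 <= A <= 1 -> 0 <= B <= 1 ->
  (inord (Num.truncn (A * K%:R)) : 'I_K.+1) = inord (Num.truncn (B * K%:R)) ->
  `|A - B| <= K%:R^-1.
Proof.
move=> HK /andP[A0 A1] /andP[B0 B1] E.
have Kp : 0 < K%:R :> R by rewrite ltr0n.
have tA : (Num.truncn (A * K%:R) < K.+1)%N.
  rewrite ltnS truncn_le_nat; apply: le_lt_trans (_ : K%:R < _); last by rewrite ltr_nat.
  by rewrite -[X in _ <= X]mul1r ler_wpM2r // ltW.
have tB : (Num.truncn (B * K%:R) < K.+1)%N.
  rewrite ltnS truncn_le_nat; apply: le_lt_trans (_ : K%:R < _); last by rewrite ltr_nat.
  by rewrite -[X in _ <= X]mul1r ler_wpM2r // ltW.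
have := congr1 val E; rewrite /= !inordK // => Et.
have /andP[a1 a2] := truncn_itv (mulr_ge0 A0 (ltW Kp)).
have /andP[b1 b2] := truncn_itv (mulr_ge0 B0 (ltW Kp)).
rewrite Et in a1 a2.
have Hab : `|A * K%:R - B * K%:R| <= 1.
  rewrite ler_norml; move: a1 a2 b1 b2; rewrite -natr1 => a1 a2 b1 b2.
  apply/andP; split; lra.
rewrite -mulrBl normrM (gtr0_norm Kp) in Hab.
by rewrite -[X in _ <= X]mul1r ler_pdivlMr.
Qed.

Lemma close_pow (K : nat) a b s (q : Q) : (0 < K)%N ->
  (forall y x : Q, `|Npow a y x - Npow b y x| <= K%:R^-1) -> (a <= s)%N ->
  \sum_x `|Npow s q x - Npow (s - a + b) q x| <= #|Q|%:R * K%:R^-1.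
Proof.
move=> HK Hc Has.
apply: le_trans (_ : \sum_(x : Q) K%:R^-1 <= _); last by rewrite sumr_const mulr_natl.
apply: ler_sum => x _.
rewrite -{1}(subnK Has) !Npow_add -sumrB.
under eq_bigr do rewrite -mulrBr.
apply: le_trans (ler_norm_sum _ _ _) _.
apply: le_trans (_ : \sum_y Npow (s - a) q y * K%:R^-1 <= _).
  apply: ler_sum => y _; rewrite normrM ger0_norm ?Npow_ge0 //.
  by rewrite ler_wpM2l ?Npow_ge0.
rewrite -mulr_suml -[X in _ <= X]mul1r ler_wpM2r ?Npow_row //.
by rewrite invr_ge0 ler0n.
Qed.

Definition vin m n k : seq 'I_3 := nseq m (0 : 'I_3) ++ nseq n (1 : 'I_3) ++ nseq k (2 : 'I_3).

Lemma R3_valid m k : k <> m -> R3 (vin m m k) (nseq m three).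
Proof. by move=> H; exists m, m, k; split => //; [move=> E; apply: H|right]. Qed.

Lemma R3_invalid m : ~ R3 (vin m m m) (nseq m three).
Proof.
case=> m' [n'] [k'] [Hnk _ Hv _].
have c1 := congr1 (count (pred1 (1 : 'I_3))) Hv.
have c2 := congr1 (count (pred1 (2 : 'I_3))) Hv.
rewrite /vin !count_cat !count_nseq /= in c1 c2.
by apply: Hnk; lia.
Qed.

Lemma Tprob_vin m k : Tprob T (nseq m three) (vin m m k) =
  acc_from ((TStart :: map (@TSym 'I_3) (nseq m (0 : 'I_3) ++ nseq m (1 : 'I_3))) ++ s2 k)
    (q0 T) [::] (nseq m three).
Proof.
by rewrite /Tprob /vin /s2 catA !map_cat rcons_cat !map_nseq cat_cons.
Qed.

Lemma arith1 s a p : (2 * a <= p)%N -> (a <= s)%N -> (s + (p - a) = s - a + p)%N.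
Proof. lia. Qed.

Lemma gap_arith pj pj' a m : (2 * a <= pj)%N -> (2 * pj <= pj')%N ->
  (pj - a <= m < pj - a + a)%N -> (pj' - a <= m < pj' - a + a)%N -> False.
Proof. lia. Qed.

Lemma arith3 p a m : (0 < a)%N -> (2 * a <= p)%N -> (p - a < m)%N -> (0 < p - a)%N /\ (m - (p - a) <> m)%N.
Proof. lia. Qed.

Lemma core (alpha eps : R) : 0 < eps ->
  (forall v w, (R3 v w -> alpha + eps <= Tprob T w v) /\
               (~ R3 v w -> Tprob T w v <= alpha - eps)) -> False.
Proof.
move=> He Hc.
pose c1 : R := (cc T).+1%:R.
have c1p : 0 < c1 by rewrite ltr0n.
pose P := (Num.truncn (c1 / eps)).+1.
have HP : c1 < P%:R * eps.
  have /andP[_ h] := truncn_itv (divr_ge0 (ltW c1p) (ltW He)).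
  by rewrite -ltr_pdivrMr.
pose K := (Num.truncn (#|Q|%:R * c1 / eps)).+1.
have HK : (0 < K)%N by [].
pose del : R := #|Q|%:R * K%:R^-1.
have del0 : 0 <= del by rewrite mulr_ge0 ?ler0n // invr_ge0 ler0n.
have Hdel : del * c1 < eps.
  have /andP[_ h] := truncn_itv (divr_ge0 (mulr_ge0 (ler0n _ #|Q|) (ltW c1p)) (ltW He)).
  rewrite -/K ltr_pdivrMr // in h.
  rewrite /del mulrAC ltr_pdivrMr ?ltr0n //.
  by rewrite [eps * _]mulrC.
pose cell := fun t : nat => [ffun yx : Q * Q => (inord (Num.truncn (Npow t yx.1 yx.2 * K%:R)) : 'I_K.+1)].
pose n := (#|{ffun Q * Q -> 'I_K.+1}| * P).+1.
have Hn : (#|{ffun Q * Q -> 'I_K.+1}| * P < #|'I_n|)%N by rewrite card_ord ltnSn.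
have [c0 Hc0] := pigeon (fun j : 'I_n => cell (2 ^ j)%N) Hn.
set S0 := [set x | _] in Hc0.
have [jx Hjx] : exists jx, jx \in S0.
  by apply/set0Pn; rewrite -card_gt0; apply: leq_ltn_trans Hc0.
pose j0 := [arg min_(j < jx in S0) (j : nat)].
have [Hj0 Hmin] : j0 \in S0 /\ forall j, j \in S0 -> (j0 <= j)%N.
  by rewrite /j0; case: arg_minnP => // i Hi Hm; split.
pose S := S0 :\ j0.
have HS : (P <= #|S|)%N.
  by move: Hc0; rewrite (cardsD1 j0 S0) Hj0 add1n ltnS.
pose a := (2 ^ j0)%N.
pose L := fun j : 'I_n => (2 ^ j - 2 ^ j0)%N.
have Sgt : forall j, j \in S -> (j0 < j)%N.
  move=> j Hj.
  have Hj' : j \in S0 by move: Hj; rewrite /S in_setD1 => /andP[].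
  have Hne : j != j0 by move: Hj; rewrite /S in_setD1 => /andP[].
  rewrite ltn_neqAle (Hmin _ Hj') andbT eq_sym.
  by apply: contra Hne => /eqP E; apply/eqP/val_inj.
have S2a : forall j, j \in S -> (2 * a <= 2 ^ j)%N.
  by move=> j Hj; rewrite /a -expnS leq_pexp2l // Sgt.
have hclose : forall j, j \in S -> forall s (q : Q), (a <= s)%N ->
    \sum_x `|Npow s q x - Npow (s + L j) q x| <= del.
  move=> j Hj s q Has.
  have Hj' : j \in S0 by move: Hj; rewrite /S in_setD1 => /andP[].
  have Ec : cell (2 ^ j0)%N = cell (2 ^ j)%N.
    by move: Hj0 Hj'; rewrite !inE => /eqP -> /eqP ->.
  have -> : (s + L j = s - a + 2 ^ j)%N by rewrite /L arith1 // S2a.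
  apply: close_pow => // y x.
  apply: cell_close => //.
  - by rewrite Npow_ge0 Npow_le1.
  - by rewrite Npow_ge0 Npow_le1.
  by have := congr1 (fun g : {ffun Q * Q -> 'I_K.+1} => g (y, x)) Ec; rewrite !ffunE.
have hgap : forall j j' m, j \in S -> j' \in S ->
    (L j <= m < L j + a)%N -> (L j' <= m < L j' + a)%N -> j = j'.
  move=> j j' m Hj Hj' h1 h2.
  have A1 := S2a j Hj; have A2 := S2a j' Hj'.
  case: (ltngtP j j') => [lt|lt|/val_inj //].
    have : (2 * 2 ^ j <= 2 ^ j')%N by rewrite -expnS leq_pexp2l.
    by move=> H; case: (gap_arith A1 H h1 h2).
  have : (2 * 2 ^ j' <= 2 ^ j)%N by rewrite -expnS leq_pexp2l.
  by move=> H; case: (gap_arith A2 H h2 h1).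
pose m := (2 ^ n)%N.
have Lm : forall j : 'I_n, (L j < m)%N.
  move=> j; rewrite /L /m; apply: leq_ltn_trans (leq_subr _ _) _.
  by rewrite ltn_exp2l.
have HB := H_bound del0 hclose hgap.
pose Bm : R := K0 S del * c1.
have Bm0 : 0 <= Bm by rewrite mulr_ge0 ?K0_ge0 // ltW.
have HF : forall (q : Q) d, \sum_(j in S) (F (m - L j) q d - F m q d) <= Bm.
  move=> q d; apply: le_trans (_ : _ <= \sum_(j in S) D (L j) m q d) _.
    by apply: ler_sum => j _; rewrite /D (ltnW (Lm j)) le_max lexx orbT.
  apply: le_trans (HB d m q) _.
  rewrite /bet /Bm ler_wpM2l ?K0_ge0 // ler_nat ltnS; exact: geq_minr.
have PB := @prefix_gen _ _ _ T _ S (fun j => s2 (m - L j)) (s2 m) (nseq m three) Bm Bm0 (base_bound Bm0 HF)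
   (TStart :: map (@TSym 'I_3) (nseq m (0 : 'I_3) ++ nseq m (1 : 'I_3))) (q0 T) [::].
have low : \sum_(j in S) (2%:R * eps) <= Bm.
  apply: le_trans PB; apply: ler_sum => j Hj.
  rewrite -!Tprob_vin.
  have [v1 _] := Hc (vin m m (m - L j)) (nseq m three).
  have [_ v2] := Hc (vin m m m) (nseq m three).
  have [_ Lne] := arith3 (expn_gt0 2 j0) (S2a j Hj) (Lm j).
  have h1' := v1 (R3_valid Lne).
  have h2 := v2 (@R3_invalid m).
  rewrite (_ : 2%:R * eps = (alpha + eps) - (alpha - eps)); last by ring.
  exact: lerB.
move: low; rewrite sumr_const /Bm /K0 => low.
have HSr : P%:R <= #|S|%:R :> R by rewrite ler_nat.
move: low HSr HP Hdel; rewrite -mulr_natl.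
set x := #|S|%:R; set p := P%:R => low HSr HP Hdel.
have x0 : 0 <= x by rewrite ler0n.
have hx : x * (del * c1) <= x * eps by rewrite ler_wpM2l // ltW.
have hp : p * eps <= x * eps by rewrite ler_wpM2r // ltW.
move: low; rewrite -[_ *+ #|S|]mulr_natl -/x.
have E1 : (x * del + 1) * c1 = x * (del * c1) + c1 by ring.
rewrite E1 [x * (_ * eps)](_ : _ = x * eps + x * eps); last by ring.
lra.
Qed.

End Main2.

Unset Implicit Arguments.

Theorem theorem8 (R : realType) :
  (forall (alpha : R), 1/2 < alpha ->
     forall T : pfst R 'I_3 'I_1, ~ computes_with_prob R3 T alpha) /\
  (forall T : pfst R 'I_3 'I_1, ~ computes_isolated_cutpoint R3 T).
Proof.
split.
  move=> alpha Ha T Hc.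
  apply: (@core R T (1/2) (alpha - 1/2)); first by rewrite subr_gt0.
  move=> v w; have [h1 h2] := Hc v w; split => H.
    by rewrite addrC subrK; exact: h1 H.
  by apply: le_trans (h2 H) _; lra.
move=> T [alpha [eps [_ _ He H]]].
exact: (@core R T alpha eps He H).
Qed.
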